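(* Let $P=\{x\in\mathbb R^n : Ax=b,\ x\ge 0\}$ be a polyhedron in standard form, and let $$P_A=\{(y^+,y^-)\in\mathbb R^{2n} : A(y^+-y^-)=0,\ \|y^+\|_1+\|y^-\|_1=1,\ y^+,y^-\ge 0\}.$$ Let $S:=\{(y^+,y^-) : y^+_i=\max\{g_i,0\},\ y^-_i=\max\{-g_i,0\}\ (i\le n),\ g\in\mathcal C(A)\}$ and $T:=\{(y^+,y^-) : \text{for some } i\le n,\ y^+_i=y^-_i=1,\ y^+_j=y^-_j=0\ (j\ne i)\}$. Then there is a subset $T'\subseteq T$ with $|T'|\le n$ such that $S\cup T'$ generates the extreme rays of the cone $\{(y^+,y^-): A(y^+-y^-)=0,\ y^\pm\ge0\}$, and the vertex set of $P_A$ is $S_1\cup T'_1$, where $S_1$ and $T'_1$ consist of the vectors $r/(\|y^+\|_1+\|y^-\|_1)$ for $r=(y^+,y^-)$ in $S$ and in $T'$ respectively.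
   Context: $\mathcal C(A)$ denotes the set of circuits of the standard form polyhedron: all $g\in\ker(A)\setminus\{0\}$, normalized to coprime integer components, that are support-minimal in $\ker(A)\setminus\{0\}$ (no $x\in\ker(A)\setminus\{0\}$ has $\operatorname{supp}(x)\subsetneq\operatorname{supp}(g)$). *)

(* Defs.v *)
From HB Require Import structures.
From mathcomp Require Import all_boot all_order all_algebra.
Set Implicit Arguments. Unset Strict Implicit. Unset Printing Implicit Defensive.
Import Order.TTheory GRing.Theory Num.Theory.
Local Open Scope ring_scope.

Section Defs.
Variables (R : realFieldType) (m n : nat) (A : 'M[rat]_(m, n)).

Definition AR : 'M[R]_(m, n) := map_mx (fun q : rat => ratr q) A.

Definition supp (x : 'cV[R]_n) : {set 'I_n} := [set i | x i 0 != 0].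

Definition is_circuit (g : 'cV[int]_n) : Prop :=
  let gR := map_mx (fun z : int => z%:~R) g : 'cV[R]_n in
  [/\ gR != 0, AR *m gR = 0,
      (forall d : int, (forall i, g i 0 \in dvdz d) -> d = 1 \/ d = -1) &
      ~ (exists x : 'cV[R]_n, [/\ x != 0, AR *m x = 0 & supp x \proper supp gR])].

(* points of R^{2n} are column vectors col_mx y+ y- *)
Definition yplus (y : 'cV[R]_(n + n)) : 'cV[R]_n := usubmx y.
Definition yminus (y : 'cV[R]_(n + n)) : 'cV[R]_n := dsubmx y.

Definition l1 (x : 'cV[R]_n) : R := \sum_i `|x i 0|.
Definition l1pm (y : 'cV[R]_(n + n)) : R := l1 (yplus y) + l1 (yminus y).

Definition cone_A (y : 'cV[R]_(n + n)) : Prop :=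
  [/\ forall i, 0 <= yplus y i 0, forall i, 0 <= yminus y i 0 &
      AR *m (yplus y - yminus y) = 0].

Definition P_A (y : 'cV[R]_(n + n)) : Prop := cone_A y /\ l1pm y = 1.

Definition S_set (y : 'cV[R]_(n + n)) : Prop :=
  exists g, is_circuit g /\
    y = col_mx (\col_i Num.max ((g i 0)%:~R) 0) (\col_i Num.max (- (g i 0)%:~R) 0).

Definition T_elt (i : 'I_n) : 'cV[R]_(n + n) :=
  col_mx (\col_j (j == i)%:R) (\col_j (j == i)%:R).

Definition T_set (y : 'cV[R]_(n + n)) : Prop := exists i, y = T_elt i.

Definition normalized (X : 'cV[R]_(n + n) -> Prop) (x : 'cV[R]_(n + n)) : Prop :=
  exists2 r, X r & x = (l1pm r)^-1 *: r.

Definition extreme_ray (K : 'cV[R]_(n + n) -> Prop) (r : 'cV[R]_(n + n)) : Prop :=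
  [/\ K r, r != 0 &
      forall u v, K u -> K v -> r = u + v -> exists2 c : R, 0 <= c & u = c *: r].

Definition generates_extreme_rays (K G : 'cV[R]_(n + n) -> Prop) : Prop :=
  (forall r, G r -> extreme_ray K r) /\
  (forall r, extreme_ray K r -> exists2 g, G g & exists2 c : R, 0 < c & r = c *: g).

Definition vertex (P : 'cV[R]_(n + n) -> Prop) (x : 'cV[R]_(n + n)) : Prop :=
  P x /\ forall y z (l : R), P y -> P z -> 0 < l < 1 ->
    x = l *: y + (1 - l) *: z -> y = z.

End Defs.

(* Main.v *)
Require Import Defs.
From HB Require Import structures.
From mathcomp Require Import all_boot all_order all_algebra.
From mathcomp Require Import lra ring.
From Stdlib Require Import Classical.
Import Order.TTheory GRing.Theory Num.Theory.
Local Open Scope ring_scope.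
Set Implicit Arguments. Unset Strict Implicit. Unset Printing Implicit Defensive.

Section Aux.
Variables (R : realFieldType) (m n : nat) (A : 'M[rat]_(m, n)).
Local Notation AR := (AR R A).
Local Notation cV := ('cV[R]_n).
Local Notation K := (cone_A A).

Definition posv (g : cV) : cV := \col_i Num.max (g i 0) 0.
Definition negv (g : cV) : cV := \col_i Num.max (- g i 0) 0.
Definition ei (i : 'I_n) : cV := \col_j (j == i)%:R.

Definition minimal (g : cV) := [/\ g != 0, AR *m g = 0 &
  ~ (exists x : cV, [/\ x != 0, AR *m x = 0 & supp x \proper supp g])].

Lemma coneP (p q : cV) : K (col_mx p q) <->
  [/\ forall i, 0 <= p i 0, forall i, 0 <= q i 0 & AR *m (p - q) = 0].
Proof. by rewrite /cone_A /yplus /yminus col_mxKu col_mxKd. Qed.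

Lemma l1pmE (p q : cV) : l1pm (col_mx p q) = l1 p + l1 q.
Proof. by rewrite /l1pm /yplus /yminus col_mxKu col_mxKd. Qed.

Lemma l1_ge0 (p : cV) : 0 <= l1 p.
Proof. by apply: sumr_ge0 => i _. Qed.

Lemma l1Z c (p : cV) : l1 (c *: p) = `|c| * l1 p.
Proof. rewrite /l1 mulr_sumr; apply: eq_bigr => i _; by rewrite mxE normrM. Qed.

Lemma l1D (p q : cV) : (forall i, 0 <= p i 0) -> (forall i, 0 <= q i 0) ->
  l1 (p + q) = l1 p + l1 q.
Proof.
move=> hp hq; rewrite /l1 -big_split; apply: eq_bigr => i _.
by rewrite mxE !ger0_norm // addr_ge0.
Qed.

Lemma l1_eq0 (p : cV) : l1 p = 0 -> p = 0.
Proof.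
move=> /eqP; rewrite /l1 psumr_eq0 => [/allP H|i _] //.
apply/colP => i; rewrite mxE; apply/eqP; rewrite -normr_eq0.
exact: (implyP (H i (mem_index_enum i))).
Qed.

Lemma coneZ (y : 'cV[R]_(n + n)) c : K y -> 0 <= c -> K (c *: y).
Proof.
rewrite -[y]vsubmxK scale_col_mx => /coneP[hp hq hA] hc; apply/coneP; split.
- by move=> i; rewrite mxE mulr_ge0.
- by move=> i; rewrite mxE mulr_ge0.
- by rewrite -scalerBr -scalemxAr hA scaler0.
Qed.

Lemma coneD (u v : 'cV[R]_(n + n)) : K u -> K v -> K (u + v).
Proof.
rewrite -[u]vsubmxK -[v]vsubmxK add_col_mx => /coneP[hp hq hA] /coneP[hp' hq' hA'].
apply/coneP; split.
- by move=> i; rewrite mxE addr_ge0.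
- by move=> i; rewrite mxE addr_ge0.
- by rewrite opprD addrACA mulmxDr hA hA' addr0.
Qed.

Lemma l1pmZ (y : 'cV[R]_(n + n)) c : l1pm (c *: y) = `|c| * l1pm y.
Proof. by rewrite -[y]vsubmxK scale_col_mx !l1pmE !l1Z mulrDr. Qed.

Lemma l1pm_ge0 (y : 'cV[R]_(n + n)) : 0 <= l1pm y.
Proof. by rewrite /l1pm addr_ge0 ?l1_ge0. Qed.

Lemma l1pmD (u v : 'cV[R]_(n + n)) : K u -> K v -> l1pm (u + v) = l1pm u + l1pm v.
Proof.
rewrite -[u]vsubmxK -[v]vsubmxK add_col_mx !l1pmE => /coneP[hp hq _] /coneP[hp' hq' _].
by rewrite !l1D // addrACA.
Qed.

Lemma l1pm_eq0 (y : 'cV[R]_(n + n)) : l1pm y = 0 -> y = 0.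
Proof.
rewrite -[y]vsubmxK l1pmE => /eqP; rewrite paddr_eq0 ?l1_ge0 // => /andP[/eqP h1 /eqP h2].
by rewrite (l1_eq0 h1) (l1_eq0 h2) col_mx0.
Qed.

End Aux.
Section Aux2.
Variables (R : realFieldType) (m n : nat) (A : 'M[rat]_(m, n)).
Local Notation AR := (AR R A).
Local Notation cV := ('cV[R]_n).
Local Notation K := (cone_A A).

Lemma maxE (a : R) : (0 <= a -> Num.max a 0 = a /\ Num.max (-a) 0 = 0) /\
  (a <= 0 -> Num.max a 0 = 0 /\ Num.max (-a) 0 = - a).
Proof.
split=> ha.
  by rewrite max_l // max_r // oppr_le0.
by rewrite max_r // max_l // oppr_ge0.
Qed.

Lemma maxpm (a : R) : Num.max a 0 - Num.max (-a) 0 = a.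
Proof.
case/orP: (le_total 0 a) => ha; first by have [-> ->] := (maxE a).1 ha; rewrite subr0.
by have [-> ->] := (maxE a).2 ha; rewrite sub0r opprK.
Qed.

Lemma split_entry (c a P N P' N' : R) : 0 <= P -> 0 <= N -> 0 <= P' -> 0 <= N' ->
  Num.max a 0 = P + P' -> Num.max (-a) 0 = N + N' -> P - N = c * a ->
  P = c * Num.max a 0 /\ N = c * Num.max (-a) 0.
Proof.
move=> h1 h2 h3 h4.
case/orP: (le_total 0 a) => ha.
  have [-> ->] := (maxE a).1 ha => e1 e2 e3; rewrite mulr0; split; lra.
have [-> ->] := (maxE a).2 ha.
move=> e1 e2 e3; rewrite mulr0 mulrN; split; lra.
Qed.

Lemma posv_negv (g : cV) : posv g - negv g = g.
Proof. by apply/colP => i; rewrite !mxE maxpm. Qed.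

Lemma posv_ge0 (g : cV) i : 0 <= posv g i 0.
Proof. by rewrite mxE le_max lexx orbT. Qed.
Lemma negv_ge0 (g : cV) i : 0 <= negv g i 0.
Proof. by rewrite mxE le_max lexx orbT. Qed.

Lemma nz_entry (g : cV) : g != 0 -> exists j, g j 0 != 0.
Proof.
move=> gn0; case/boolP: [exists j, g j 0 != 0] => [/existsP//|/existsPn H].
by case/eqP: gn0; apply/colP => i; rewrite mxE; move: (H i); rewrite negbK => /eqP.
Qed.

Lemma elim_min (g x : cV) : minimal A g -> AR *m x = 0 -> supp x \subset supp g ->
  exists c, x = c *: g.
Proof.
case=> gn0 Ag nomin Ax sxg.
have [j gj] := nz_entry gn0.
exists (x j 0 / g j 0).
apply/eqP; rewrite -subr_eq0; apply/negPn/negP => yn0.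
apply: nomin; exists (x - (x j 0 / g j 0) *: g); split => //.
  by rewrite mulmxBr -scalemxAr Ax Ag scaler0 subr0.
apply/properP; split.
  apply/subsetP => i; rewrite !inE !mxE; apply: contraR => /negPn/eqP gi.
  have : i \notin supp x by apply/negP => /(subsetP sxg); rewrite inE gi eqxx.
  by rewrite inE negbK => /eqP ->; rewrite gi mulr0 subr0 eqxx.
exists j; first by rewrite inE.
by rewrite inE !mxE negbK divfK // subrr.
Qed.

Lemma min_extreme (g : cV) : minimal A g -> extreme_ray K (col_mx (posv g) (negv g)).
Proof.
move=> gmin; case: (gmin) => gn0 Ag _.
split.
- apply/coneP; split; [exact: posv_ge0 | exact: negv_ge0 | by rewrite posv_negv].
- rewrite col_mx_eq0; apply: contra gn0 => /andP[/eqP h1 /eqP h2].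
  by rewrite -(posv_negv g) h1 h2 subrr.
move=> u v; rewrite -[u]vsubmxK -[v]vsubmxK.
move: (usubmx u) (dsubmx u) (usubmx v) (dsubmx v) => up un vp vn.
move=> /coneP[hup hun Au] /coneP[hvp hvn _].
rewrite add_col_mx => /eq_col_mx[Ep En].
have Ei i : Num.max (g i 0) 0 = up i 0 + vp i 0 /\ Num.max (- g i 0) 0 = un i 0 + vn i 0.
  by split; [move: (congr1 (fun M : cV => M i 0) Ep) | move: (congr1 (fun M : cV => M i 0) En)];
     rewrite !mxE.
have [c Ec] : exists c, up - un = c *: g.
  apply: elim_min => //; apply/subsetP => i; rewrite !inE !mxE; apply: contraR.
  move=> /negPn/eqP gi; case: (Ei i); rewrite gi oppr0 maxxx => e1 e2.
  have : up i 0 + vp i 0 == 0 by rewrite -e1.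
  rewrite paddr_eq0 // => /andP[/eqP -> _].
  have : un i 0 + vn i 0 == 0 by rewrite -e2.
  by rewrite paddr_eq0 // => /andP[/eqP -> _]; rewrite subrr.
have Ci i : up i 0 = c * Num.max (g i 0) 0 /\ un i 0 = c * Num.max (- g i 0) 0.
  case: (Ei i) => e1 e2; apply: (split_entry (P' := vp i 0) (N' := vn i 0)) => //.
  by move: (congr1 (fun M : cV => M i 0) Ec); rewrite !mxE.
have c_ge0 : 0 <= c.
  have [j gj] := nz_entry gn0.
  case: (ltrgtP 0 (g j 0)) => gj0; last by move: gj; rewrite -gj0 eqxx.
    have := hup j; rewrite (Ci j).1; have [-> _] := (maxE (g j 0)).1 (ltW gj0).
    by rewrite pmulr_lge0.
  have := hun j; rewrite (Ci j).2; have [_ ->] := (maxE (g j 0)).2 (ltW gj0).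
  by rewrite pmulr_lge0 // oppr_gt0.
exists c => //; rewrite scale_col_mx; congr col_mx; apply/colP => i; rewrite !mxE.
  by rewrite (Ci i).1.
by rewrite (Ci i).2.
Qed.

End Aux2.
Section Aux3.
Variables (R : realFieldType) (m n : nat) (A : 'M[rat]_(m, n)).
Local Notation AR := (AR R A).
Local Notation cV := ('cV[R]_n).
Local Notation K := (cone_A A).

Lemma T_eltE (i : 'I_n) : T_elt R i = col_mx (ei R i) (ei R i) :> 'cV[R]_(n + n).
Proof. by []. Qed.

Lemma ei_ge0 (i j : 'I_n) : 0 <= ei R i j 0.
Proof. by rewrite mxE ler0n. Qed.

Lemma ei_neq0 (i : 'I_n) : ei R i != 0.
Proof. by apply/eqP => /colP/(_ i); rewrite !mxE eqxx => /eqP; rewrite oner_eq0. Qed.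

Lemma T_cone (i : 'I_n) : K (T_elt R i).
Proof. by rewrite T_eltE; apply/coneP; split; [exact: ei_ge0|exact: ei_ge0|rewrite subrr mulmx0]. Qed.

Lemma T_neq0 (i : 'I_n) : T_elt R i != 0.
Proof. by rewrite T_eltE col_mx_eq0 negb_and ei_neq0. Qed.

Lemma T_extreme (i : 'I_n) : AR *m ei R i != 0 -> extreme_ray K (T_elt R i).
Proof.
move=> Ai; split; [exact: T_cone | exact: T_neq0 |].
move=> u v; rewrite T_eltE -[u]vsubmxK -[v]vsubmxK.
move: (usubmx u) (dsubmx u) (usubmx v) (dsubmx v) => up un vp vn.
move=> /coneP[hup hun Au] /coneP[hvp hvn _].
rewrite add_col_mx => /eq_col_mx[Ep En].
have Z (w w' : cV) : (forall j, 0 <= w j 0) -> (forall j, 0 <= w' j 0) ->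
    ei R i = w + w' -> w = w i 0 *: ei R i.
  move=> h h' E; apply/colP => j; rewrite !mxE.
  case: eqP => [->|/eqP ji]; first by rewrite mulr1.
  move: (congr1 (fun M : cV => M j 0) E); rewrite !mxE (negbTE ji) mulr0 => /esym/eqP.
  by rewrite paddr_eq0 // => /andP[/eqP].
have Eup := Z _ _ hup hvp Ep; have Eun := Z _ _ hun hvn En.
have e : up i 0 = un i 0.
  move: Au; rewrite {1}Eup {1}Eun -scalerBl -scalemxAr => /eqP; rewrite scaler_eq0 (negbTE Ai) orbF.
  by rewrite subr_eq0 => /eqP.
exists (up i 0) => //.
by rewrite scale_col_mx {1}Eup {1}Eun e.
Qed.

Lemma suppZ (k : R) (x : cV) : k != 0 -> supp (k *: x) = supp x.
Proof. by move=> k0; apply/setP => i; rewrite !inE mxE mulf_eq0 negb_or k0. Qed.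

Lemma lower_bound (P : pred 'I_n) (f : 'I_n -> R) : (forall j, P j -> 0 < f j) ->
  exists2 e, 0 < e & forall j, P j -> e <= f j.
Proof.
move=> fP.
suff [e e0 He] : exists2 e, 0 < e & forall j, j \in enum 'I_n -> P j -> e <= f j.
  by exists e => // j; apply: He; rewrite mem_enum.
elim: (enum 'I_n) => [|a s [e e0 He]]; first by exists 1.
exists (Num.min e (if P a then f a else 1)).
  by rewrite lt_min e0 /=; case: ifP => // /fP.
move=> j; rewrite in_cons => /orP[/eqP -> Pa|js Pj].
  by rewrite ge_min Pa lexx orbT.
by rewrite ge_min He.
Qed.

Lemma conf (a b : R) : `|a| <= `|b| ->
  Num.max (b + a) 0 + Num.max (b - a) 0 = Num.max b 0 + Num.max b 0.
Proof.
case/orP: (le_total 0 b) => hb.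
  rewrite (ger0_norm hb) ler_norml => /andP[h1 h2].
  have [-> _] := (maxE b).1 hb.
  have [-> _] := (maxE (b + a)).1 (ltac:(lra) : 0 <= b + a).
  have [-> _] := (maxE (b - a)).1 (ltac:(lra) : 0 <= b - a); lra.
rewrite (ler0_norm hb) ler_norml => /andP[h1 h2].
have [-> _] := (maxE b).2 hb.
have [-> _] := (maxE (b + a)).2 (ltac:(lra) : b + a <= 0).
have [-> _] := (maxE (b - a)).2 (ltac:(lra) : b - a <= 0); lra.
Qed.

Lemma conf2 (a b : R) : `|a| <= `|b| ->
  Num.max (- (b + a)) 0 + Num.max (- (b - a)) 0 = Num.max (- b) 0 + Num.max (- b) 0.
Proof.
case/orP: (le_total 0 b) => hb.
  rewrite (ger0_norm hb) ler_norml => /andP[h1 h2].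
  have [_ ->] := (maxE b).1 hb.
  have [_ ->] := (maxE (b + a)).1 (ltac:(lra) : 0 <= b + a).
  have [_ ->] := (maxE (b - a)).1 (ltac:(lra) : 0 <= b - a); lra.
rewrite (ler0_norm hb) ler_norml => /andP[h1 h2].
have [_ ->] := (maxE b).2 hb.
have [_ ->] := (maxE (b + a)).2 (ltac:(lra) : b + a <= 0).
have [_ ->] := (maxE (b - a)).2 (ltac:(lra) : b - a <= 0); lra.
Qed.

Lemma extreme_class (r : 'cV[R]_(n + n)) : extreme_ray K r ->
  (exists g c, [/\ minimal A g, 0 < c & r = c *: col_mx (posv g) (negv g)]) \/
  (exists i c, [/\ AR *m ei R i != 0, 0 < c & r = c *: T_elt R i]).
Proof.
case=> Kr rn0 ext.
move: Kr rn0 ext; rewrite -[r]vsubmxK; move: (usubmx r) (dsubmx r) => p q.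
move=> Kr rn0 ext; have /coneP[hp hq Apq] := Kr.
case/boolP: [exists i, (0 < p i 0) && (0 < q i 0)].
  case/existsP => i /andP[pi qi]; right.
  pose t := Num.min (p i 0) (q i 0).
  have t0 : 0 < t by rewrite lt_min pi qi.
  have Ku : K (t *: T_elt R i) by apply: coneZ; [exact: T_cone | exact: ltW].
  have Kv : K (col_mx (p - t *: ei R i) (q - t *: ei R i)).
    apply/coneP; split.
    - move=> j; rewrite !mxE subr_ge0; case: eqP => [->|_]; last by rewrite mulr0 hp.
      by rewrite mulr1 ge_min lexx.
    - move=> j; rewrite !mxE subr_ge0; case: eqP => [->|_]; last by rewrite mulr0 hq.
      by rewrite mulr1 ge_min lexx orbT.
    - by rewrite opprB addrA subrK.
  have E0 : col_mx p q = t *: T_elt R i + col_mx (p - t *: ei R i) (q - t *: ei R i).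
    by rewrite T_eltE scale_col_mx add_col_mx ![t *: ei R i + _]addrC !subrK.
  have [c c0 Ec] := ext _ _ Ku Kv E0.
  have cn0 : c != 0.
    apply: contraNneq (T_neq0 i) => c00; move: Ec; rewrite c00 scale0r => /eqP.
    by rewrite scaler_eq0 gt_eqF.
  have Er : col_mx p q = (c^-1 * t) *: T_elt R i by rewrite -scalerA Ec scalerA mulVf // scale1r.
  exists i, (c^-1 * t); split => //; last by rewrite mulr_gt0 // invr_gt0 lt_def cn0.
  apply/eqP => Ae.
  set k := c^-1 * t.
  have k0 : 0 < k by rewrite mulr_gt0 // invr_gt0 lt_def cn0.
  have K1 : K (k *: col_mx (ei R i) 0).
    apply: coneZ (ltW k0); apply/coneP; split => [j|j|].
    - exact: ei_ge0.
    - by rewrite mxE.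
    - by rewrite subr0.
  have K2 : K (k *: col_mx 0 (ei R i)).
    apply: coneZ (ltW k0); apply/coneP; split => [j|j|].
    - by rewrite mxE.
    - exact: ei_ge0.
    - by rewrite sub0r mulmxN Ae oppr0.
  have E1 : col_mx p q = k *: col_mx (ei R i) 0 + k *: col_mx 0 (ei R i).
    by rewrite Er -scalerDr add_col_mx addr0 add0r.
  have [c' _ E'] := ext _ _ K1 K2 E1.
  move: E'; rewrite Er scalerA !scale_col_mx => /eq_col_mx[F1 F2].
  move: (congr1 (fun M : cV => M i 0) F1) (congr1 (fun M : cV => M i 0) F2).
  rewrite !mxE eqxx !mulr1 mulr0 => e1 e2.
  by move: k0; rewrite e1 -e2 ltxx.
move/existsPn => H; left.
pose g := p - q.
have Hpq i : p i 0 = 0 \/ q i 0 = 0.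
  move: (H i); rewrite negb_and !lt0r (hp i) (hq i) !andbT !negbK.
  by case/orP => /eqP; auto.
have Ep : posv g = p.
  apply/colP => i; rewrite !mxE; case: (Hpq i) => ->.
    by have [-> _] := (maxE (0 - q i 0)).2 (ltac:(rewrite sub0r oppr_le0; exact: hq) : 0 - q i 0 <= 0).
  by have [-> _] := (maxE (p i 0 - 0)).1 (ltac:(rewrite subr0; exact: hp) : 0 <= p i 0 - 0); rewrite subr0.
have En : negv g = q.
  apply/colP => i; rewrite !mxE; case: (Hpq i) => ->.
    by have [_ ->] := (maxE (0 - q i 0)).2 (ltac:(rewrite sub0r oppr_le0; exact: hq) : 0 - q i 0 <= 0); rewrite sub0r opprK.
  by have [_ ->] := (maxE (p i 0 - 0)).1 (ltac:(rewrite subr0; exact: hp) : 0 <= p i 0 - 0).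
exists g, 1; rewrite scale1r Ep En; split => //.
split => //.
- apply: contra rn0 => /eqP g0; rewrite -Ep -En g0 col_mx_eq0.
  by apply/andP; split; apply/eqP/colP => i; rewrite !mxE ?oppr0 maxxx.
case=> x [xn0 Ax /properP[sxg [j jg jx]]].
have gx j' : x j' 0 != 0 -> g j' 0 != 0.
  by move=> xj; have := subsetP sxg j'; rewrite !inE; apply.
have [e e0 He] : exists2 e : R, 0 < e & forall j, x j 0 != 0 -> e <= `|g j 0| / `|x j 0|.
  by apply: lower_bound => j' xj; rewrite divr_gt0 // normr_gt0 // gx.
have Hb j' : `|e * x j' 0| <= `|g j' 0|.
  case: (eqVneq (x j' 0) 0) => [->|xj]; first by rewrite mulr0 normr0 normr_ge0.
  by rewrite normrM (gtr0_norm e0) -ler_pdivlMr ?normr_gt0 //; exact: He.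
have Ag : AR *m g = 0 := Apq.
clearbody g.
pose g1 := g + e *: x; pose g2 := g - e *: x.
have Ag1 : AR *m g1 = 0 by rewrite /g1 mulmxDr -scalemxAr Ag Ax scaler0 addr0.
have Ag2 : AR *m g2 = 0 by rewrite /g2 mulmxBr -scalemxAr Ag Ax scaler0 subr0.
have Kw (h : cV) : AR *m h = 0 -> K (2^-1 *: col_mx (posv h) (negv h)).
  move=> Ah; apply: coneZ; last by rewrite invr_ge0 ler0n.
  by apply/coneP; split; [exact: posv_ge0 | exact: negv_ge0 | rewrite posv_negv].
have E0 : col_mx p q = 2^-1 *: col_mx (posv g1) (negv g1) + 2^-1 *: col_mx (posv g2) (negv g2).
  rewrite -scalerDr add_col_mx scale_col_mx -Ep -En; congr col_mx; apply/colP => i; rewrite !mxE.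
    rewrite conf; [lra | exact: Hb].
  rewrite conf2; [lra | exact: Hb].
have [c _ Ec] := ext _ _ (Kw _ Ag1) (Kw _ Ag2) E0.
move: Ec; rewrite !scale_col_mx => /eq_col_mx[F1 F2].
have Eg : 2^-1 *: g1 = c *: g.
  by rewrite -(posv_negv g1) scalerBr F1 F2 -scalerBr -Ep -En posv_negv.
pose k := (2 * c - 1) / e.
have Ex : x = k *: g.
  apply/colP => i; move: (congr1 (fun M : cV => M i 0) Eg); rewrite !mxE => h.
  have en0 : e != 0 by rewrite gt_eqF.
  apply: (mulfI en0); rewrite /k [RHS]mulrA [e * _ in RHS]mulrC divfK //.
  lra.
case: (eqVneq k 0) => k0.
  by move: xn0; rewrite Ex k0 scale0r eqxx.
by move: jx; rewrite Ex suppZ // jg.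
Qed.
End Aux3.
Section Aux4.
Variables (R : realFieldType) (m n : nat) (A : 'M[rat]_(m, n)).
Local Notation AR := (AR R A).
Local Notation cV := ('cV[R]_n).
Local Notation K := (cone_A A).

Lemma ARE : AR = map_mx ratr A.
Proof. by []. Qed.

Lemma rat_ker (g : cV) : g != 0 -> AR *m g = 0 ->
  exists q : 'cV[rat]_n, [/\ q != 0, A *m q = 0 & forall j, g j 0 = 0 -> q j 0 = 0].
Proof.
move=> gn0 Ag.
pose D : 'M[rat]_n := diag_mx (\row_j (g j 0 == 0)%:R).
pose M := col_mx A D.
have MR : map_mx (@ratr R) M *m g = 0.
  rewrite map_col_mx mul_col_mx -ARE Ag map_diag_mx mul_diag_mx.
  apply/eqP; rewrite col_mx_eq0 eqxx /=; apply/eqP/matrixP => i j; rewrite !mxE (ord1 j).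
  by case: eqP => [->|_]; rewrite ?mulr0 // rmorph0 mul0r.
have nf : ~~ row_free (map_mx (@ratr R) M)^T.
  apply/negP => fr; move: gn0.
  by rewrite -trmx_eq0 -(mulmx_free_eq0 _ fr) -trmx_mul MR trmx0 eqxx.
have rk : (\rank M^T < n)%N.
  by move: nf; rewrite -row_leq_rank mxrank_tr mxrank_map -mxrank_tr ltnNge.
have kn0 : kermx M^T != 0.
  apply/eqP => k0; move: (mxrank_ker M^T); rewrite k0 mxrank0 => /esym/eqP.
  by rewrite subn_eq0 leqNgt rk.
have [i ri] : exists i, row i (kermx M^T) != 0.
  case/boolP: [exists i, row i (kermx M^T) != 0] => [/existsP//|/existsPn H].
  case/eqP: kn0; apply/row_matrixP => i; rewrite row0; apply/eqP.
  by move: (H i); rewrite negbK.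
pose q := (row i (kermx M^T))^T.
have Mq : M *m q = 0.
  have : (row i (kermx M^T) *m M^T)^T = 0 by rewrite -row_mul mulmx_ker row0 trmx0.
  by rewrite trmx_mul trmxK.
move: Mq; rewrite mul_col_mx => /eqP; rewrite col_mx_eq0 => /andP[/eqP Aq /eqP Dq].
exists q; split => //; first by rewrite trmx_eq0.
move=> j gj; move: (congr1 (fun N : 'cV[rat]_n => N j 0) Dq).
by rewrite mul_diag_mx !mxE gj eqxx mul1r.
Qed.

Lemma int_vec (q : 'cV[rat]_n) : exists2 d : int, 0 < d &
  exists k : 'cV[int]_n, map_mx (fun z : int => z%:~R) k = d%:~R *: map_mx ratr q :> cV.
Proof.
exists (\prod_j denq (q j 0)); first by apply: prodr_gt0 => j _; exact: denq_gt0.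
exists (\col_j (numq (q j 0) * \prod_(l < n | l != j) denq (q l 0))).
apply/colP => j; rewrite !mxE [in RHS](bigD1 j) //= !intrM /ratr.
have dn0 : (denq (q j 0))%:~R != 0 :> R by rewrite intr_eq0 denq_neq0.
by field.
Qed.

End Aux4.
Section Aux5.
Variables (R : realFieldType) (m n : nat) (A : 'M[rat]_(m, n)).
Local Notation AR := (AR R A).
Local Notation cV := ('cV[R]_n).
Local Notation iR h := (map_mx (fun z : int => z%:~R) h : cV).

Lemma absz_gt1 (d : int) : d != 0 -> ~ (d = 1 \/ d = -1) -> (1 < `|d|)%N.
Proof.
case: d => [[|[|k]]|[|k]] //= _ H; exfalso; apply: H; auto.
Qed.

Lemma step (g : cV) (k1 : 'cV[int]_n) (c1 : R) : minimal A g -> 0 < c1 -> iR k1 = c1 *: g ->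
  is_circuit R A k1 \/ exists k2 c2, [/\ 0 < c2, iR k2 = c2 *: g &
     (\sum_i `|k2 i 0%R| < \sum_i `|k1 i 0%R|)%N].
Proof.
move=> gmin c1p E1; case: (gmin) => gn0 Ag nomin.
have c1n0 : c1 != 0 by rewrite gt_eqF.
have cg : c1 *: g != 0 by rewrite scaler_eq0 negb_or c1n0.
have E1i i : (k1 i 0)%:~R = c1 * g i 0 by move: (congr1 (fun M : cV => M i 0) E1); rewrite !mxE.
case: (classic (exists d : int, (forall i, k1 i 0 \in dvdz d) /\ ~ (d = 1 \/ d = -1)))
  => [[d [dd nd]]|H]; [right|left].
  have dn0 : d != 0.
    apply/eqP => d0; move: cg; rewrite -E1 => /eqP; apply.
    apply/colP => i; rewrite !mxE.
    by move: (dd i); rewrite d0 unfold_in /= dvd0n absz_eq0 => /eqP ->.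
  have D1 := absz_gt1 dn0 nd.
  set D := `|d|%N in D1.
  have dd' i : (D%:Z %| k1 i 0%R)%Z by exact: (dd i).
  pose k2 := \col_i ((k1 i 0%R) %/ D%:Z)%Z.
  have Dn0 : D%:R != 0 :> R by rewrite pnatr_eq0 -lt0n (ltn_trans _ D1).
  exists k2, (c1 / D%:R); split.
  - by rewrite divr_gt0 // ltr0n (ltn_trans _ D1).
  - apply/colP => i; rewrite !mxE.
    have e := E1i i; rewrite -[k1 i 0](divzK (dd' i)) intrM in e.
    apply: (mulIf Dn0); rewrite [LHS]e /=; field; exact: Dn0.
  - have S1 : (\sum_i `|k1 i 0%R| = (\sum_i `|k2 i 0%R|) * D)%N.
      rewrite big_distrl /=; apply: eq_bigr => i _.
      by rewrite -[k1 i 0](divzK (dd' i)) abszM mxE.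
    rewrite S1 ltn_Pmulr // lt0n; apply/negP; rewrite sum_nat_eq0 => /forallP H0.
    move: cg; rewrite -E1 => /eqP; apply.
    apply/colP => i; rewrite !mxE.
    rewrite -[k1 i 0](divzK (dd' i)); move: (H0 i); rewrite absz_eq0 mxE => /eqP ->.
    by rewrite mul0r.
rewrite /is_circuit; split.
- by rewrite E1 scaler_eq0 negb_or c1n0.
- by rewrite E1 -scalemxAr Ag scaler0.
- move=> d dd; case: (classic (d = 1 \/ d = -1)) => // nd; exfalso; apply: H.
  by exists d.
- by rewrite E1 suppZ.
Qed.

Lemma min_circuit (g : cV) : minimal A g ->
  exists h : 'cV[int]_n, is_circuit R A h /\ exists2 c : R, 0 < c & g = c *: iR h.
Proof.
move=> gmin; case: (gmin) => gn0 Ag nomin.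
have [q [qn0 Aq qg]] := rat_ker gn0 Ag.
pose qR := map_mx (@ratr R) q.
have qRn0 : qR != 0 by rewrite map_mx_eq0.
have AqR : AR *m qR = 0 by rewrite ARE -map_mxM Aq map_mx0.
have [c0 Ec0] : exists c0, qR = c0 *: g.
  apply: elim_min gmin AqR _; apply/subsetP => i; rewrite !inE; apply: contraR.
  by move/negPn/eqP => /qg gi; rewrite mxE gi rmorph0 eqxx.
have c0n0 : c0 != 0 by apply: contraNneq qRn0 => c00; rewrite Ec0 c00 scale0r.
have [d d0 [k Ek]] := int_vec R q.
pose s := d%:~R * c0.
have sn0 : s != 0 by rewrite mulf_neq0 // intr_eq0 gt_eqF.
have Eks : iR k = s *: g by rewrite Ek -/qR Ec0 scalerA.
have [k1 [c1 c1p E1]] : exists k1 : 'cV[int]_n, exists2 c1 : R, 0 < c1 & iR k1 = c1 *: g.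
  case/orP: (le_total 0 s) => hs.
    by exists k, s => //; rewrite lt_def sn0.
  exists (- k), (- s); first by rewrite oppr_gt0 lt_def eq_sym sn0.
  apply/colP => i; move: (congr1 (fun M : cV => M i 0) Eks); rewrite !mxE intrN => ->.
  by rewrite mulNr.
have main : forall N (k1 : 'cV[int]_n) c1, (\sum_i `|k1 i 0%R| <= N)%N -> 0 < c1 ->
    iR k1 = c1 *: g -> exists h : 'cV[int]_n, is_circuit R A h /\ exists2 c : R, 0 < c & g = c *: iR h.
  elim=> [|N IH] k2 c2 hN c2p E2; case: (step gmin c2p E2) => [hc|[k3 [c3 [c3p E3 lt]]]].
  - exists k2; split => //; exists c2^-1; first by rewrite invr_gt0.
    by rewrite E2 scalerA mulVf ?gt_eqF // scale1r.
  - by have := leq_trans lt hN.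
  - exists k2; split => //; exists c2^-1; first by rewrite invr_gt0.
    by rewrite E2 scalerA mulVf ?gt_eqF // scale1r.
  - by apply: (IH k3 c3) => //; rewrite -ltnS (leq_trans lt hN).
exact: (main _ k1 c1 (leqnn _)).
Qed.

End Aux5.
Section Aux6.
Variables (R : realFieldType) (m n : nat) (A : 'M[rat]_(m, n)).
Local Notation AR := (AR R A).
Local Notation cV := ('cV[R]_n).
Local Notation cV2 := ('cV[R]_(n + n)).
Local Notation K := (cone_A A).
Local Notation iR h := (map_mx (fun z : int => z%:~R) h : cV).

Lemma l1pm_gt0 (r : cV2) : extreme_ray K r -> 0 < l1pm r.
Proof.
case=> _ rn0 _; rewrite lt_def l1pm_ge0 andbT.
by apply: contra rn0 => /eqP /l1pm_eq0 ->.
Qed.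

Lemma l1pm0 : l1pm (0 : cV2) = 0.
Proof. by have := l1pmZ (0 : cV2) 0; rewrite scale0r normr0 mul0r. Qed.

Lemma vertex_extreme (x : cV2) : vertex (P_A A) x -> extreme_ray K x.
Proof.
case=> [[Kx x1] vx]; split => //.
  by apply/eqP => x0; move: x1; rewrite x0 l1pm0 => /eqP; rewrite eq_sym oner_eq0.
move=> u v Ku Kv E.
have hab : l1pm u + l1pm v = 1 by rewrite -x1 E (l1pmD Ku Kv).
case: (eqVneq (l1pm u) 0) => a0.
  by exists 0; rewrite ?lexx // scale0r; apply: l1pm_eq0.
case: (eqVneq (l1pm v) 0) => b0.
  exists 1; rewrite ?ler01 // scale1r E (l1pm_eq0 b0) addr0 //.
set a := l1pm u in hab a0 *; set b := l1pm v in hab b0 *.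
have a_gt0 : 0 < a by rewrite lt_def a0 l1pm_ge0.
have b_gt0 : 0 < b by rewrite lt_def b0 l1pm_ge0.
pose y := a^-1 *: u; pose z := b^-1 *: v.
have Py : P_A A y.
  split; first by apply: coneZ; rewrite // invr_ge0 ltW.
  by rewrite /y l1pmZ ger0_norm ?invr_ge0 ?ltW // mulVf.
have Pz : P_A A z.
  split; first by apply: coneZ; rewrite // invr_ge0 ltW.
  by rewrite /z l1pmZ ger0_norm ?invr_ge0 ?ltW // mulVf.
have Eu : u = a *: y by rewrite /y scalerA mulfV // scale1r.
have Ev : v = b *: z by rewrite /z scalerA mulfV // scale1r.
have bE : b = 1 - a by lra.
have yz : y = z.
  apply: (vx y z a Py Pz); first by rewrite a_gt0 /=; lra.
  by rewrite E {1}Eu Ev bE.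
have xy : x = y by rewrite E {1}Eu Ev -yz -scalerDl hab scale1r.
by exists a; [exact: ltW | rewrite xy].
Qed.

Lemma pick_eq (w r : cV2) (k t c : R) : l1pm w = 1 -> 0 < k -> l1pm r = k -> 0 < t ->
  0 <= c -> (k * t) *: w = c *: r -> w = k^-1 *: r.
Proof.
move=> w1 k0 rk t0 c0 H.
have kt0 : 0 < k * t by rewrite mulr_gt0.
have e : k * t = c * k.
  by have := congr1 (@l1pm R n) H; rewrite !l1pmZ w1 rk mulr1 (gtr0_norm kt0) (ger0_norm c0).
have kn0 : k != 0 by rewrite gt_eqF.
have ct : c = t by apply: (mulIf kn0); rewrite -e mulrC.
have ktn0 : k * t != 0 by rewrite gt_eqF.
apply: (scalerI ktn0).
by rewrite H scalerA ct; congr (_ *: r); field.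
Qed.

Lemma extreme_vertex (r : cV2) : extreme_ray K r -> vertex (P_A A) ((l1pm r)^-1 *: r).
Proof.
move=> er; have k0 := l1pm_gt0 er; case: er => Kr rn0 ext.
set k := l1pm r in k0 *.
have kn0 : k != 0 by rewrite gt_eqF.
split.
  split; first by apply: coneZ; rewrite // invr_ge0 ltW.
  by rewrite l1pmZ ger0_norm ?invr_ge0 ?ltW // mulVf.
move=> y z l [Ky y1] [Kz z1] /andP[l0 l1] E.
have Er : r = (k * l) *: y + (k * (1 - l)) *: z.
  by rewrite -!scalerA -scalerDr -E scalerA mulfV // scale1r.
have Ku : K ((k * l) *: y) by apply: coneZ; rewrite // mulr_ge0 // ltW.
have Kv : K ((k * (1 - l)) *: z) by apply: coneZ; rewrite // mulr_ge0 ?ltW // subr_gt0.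
have [c c0 Ec] := ext _ _ Ku Kv Er.
have [c' c0' Ec'] := ext _ _ Kv Ku (etrans Er (addrC _ _)).
rewrite (pick_eq y1 k0 erefl l0 c0 Ec).
by rewrite (pick_eq z1 k0 erefl _ c0' Ec') // subr_gt0.
Qed.

Lemma posvZ (c : R) (v : cV) : 0 < c -> posv (c *: v) = c *: posv v.
Proof. by move=> c0; apply/colP => i; rewrite !mxE maxr_pMr ?ltW // mulr0. Qed.

Lemma negvZ (c : R) (v : cV) : 0 < c -> negv (c *: v) = c *: negv v.
Proof. by move=> c0; apply/colP => i; rewrite !mxE maxr_pMr ?ltW // mulr0 mulrN. Qed.

Lemma S_eltE (h : 'cV[int]_n) :
  col_mx (\col_i Num.max ((h i 0)%:~R) 0) (\col_i Num.max (- (h i 0)%:~R) 0) =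
  col_mx (posv (iR h)) (negv (iR h)) :> cV2.
Proof. by congr col_mx; apply/colP => i; rewrite !mxE. Qed.

End Aux6.

Unset Implicit Arguments.
Set Strict Implicit.

Theorem corollary3 (R : realFieldType) (m n : nat) (A : 'M[rat]_(m, n)) :
  exists I : {set 'I_n},
    let T' := fun y : 'cV[R]_(n + n) => exists2 i, i \in I & y = T_elt R i in
    [/\ #|I| <= n,
        (forall y, T' y -> T_set y),
        generates_extreme_rays (cone_A A) (fun y => S_set A y \/ T' y) &
        forall x, vertex (P_A A) x <-> (normalized (S_set A) x \/ normalized T' x)]%N.
Proof.
exists [set i | AR R A *m ei R i != 0] => T'.
have gen : generates_extreme_rays (cone_A A) (fun y => S_set A y \/ T' y).
  split.
    move=> r [[h [hc ->]]|[i]].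
      rewrite S_eltE; apply: min_extreme.
      by case: hc => h1 h2 _ h4; split.
    by rewrite inE => Ai ->; apply: T_extreme.
  move=> r /extreme_class [[g [c [gmin c0 ->]]]|[i [c [Ai c0 ->]]]].
    have [h [hc [c' c0' Eg]]] := min_circuit gmin.
    exists (col_mx (\col_i Num.max ((h i 0)%:~R) 0) (\col_i Num.max (- (h i 0)%:~R) 0)).
      by left; exists h.
    exists (c * c'); first by rewrite mulr_gt0.
    by rewrite S_eltE Eg posvZ // negvZ // -scale_col_mx scalerA.
  exists (T_elt R i); first by right; exists i; rewrite ?inE.
  by exists c.
split => //.
- by apply: leq_trans (max_card _) _; rewrite card_ord.
- by move=> y [i _ ->]; exists i.
move=> x; split.
  move=> vx; have ex := vertex_extreme vx.
  have [[_ x1] _] := vx.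
  have [s Gs [c c0 Exs]] := gen.2 _ ex.
  have L : c * l1pm s = 1 by rewrite -x1 Exs l1pmZ gtr0_norm.
  have Ln0 : l1pm s != 0 by apply: contra_eq_neq L => ->; rewrite mulr0 eq_sym oner_eq0.
  have -> : x = (l1pm s)^-1 *: s.
    by rewrite Exs; congr (_ *: s); apply: (mulIf Ln0); rewrite L mulVf.
  by case: Gs => Gs; [left|right]; exists s.
case=> -[r Gr ->]; apply: extreme_vertex; apply: gen.1; by [left|right].
Qed.
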